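(* Let $\mathcal C$ be a subcategory of the category of groups, let $\mathcal H$ be a class of maps for $\mathcal C$, and let $\Gamma$ be an $\mathcal H$-invariant subgroup function on $\mathcal C$. Then for every $A\in\mathcal C$, $\Gamma_S(A)$ is a normal subgroup of $A$, and $\Gamma_S$ is an $\mathcal H$-invariant subgroup function, i.e. $f(\Gamma_S(A))\subset\Gamma_S(B)$ for every $f:A\to B$ in $\mathcal H$. Moreover, let $\mathcal H=\{\mathcal H^n\}_{n\ge0}$ be a collection of classes of maps for $\mathcal C$ with $\mathcal H^{n+1}\subseteq\mathcal H^n$ for all $n$, and let $\{\Gamma^n\}_{n\ge 0}$ be an $\mathcal H$-invariant series. Then $\{\Gamma^n_S\}_{n\ge0}$ is an $\mathcal H$-invariant series; that is, $\Gamma^0_S(A)=A$, $\Gamma^{n+1}_S(A)\subset\Gamma^n_S(A)$ for all $n$ and all $A\in\mathcal C$, each $\Gamma^n_S(A)$ is normal in $A$, and $f(\Gamma^n_S(A))\subset\Gamma^n_S(B)$ whenever $f:A\to B$ lies in $\mathcal H^n$.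
   Context: A subgroup function on $\mathcal C$ assigns to each $A\in\mathcal C$ a normal subgroup $\Gamma(A)\trianglelefteq A$. A series on $\mathcal C$ is a collection $\{\Gamma^n\}_{n\ge0}$ of subgroup functions with $\{e\}\subset\dots\subset\Gamma^{n+1}(A)\subset\Gamma^n(A)\subset\dots\subset\Gamma^0(A)=A$ for all $A$. A class of maps for $\mathcal C$ is a set $\mathcal H$ of morphisms of $\mathcal C$ that contains all isomorphisms, is closed under composition, and is closed under nudge-outs: whenever $f:A\to B$ and $f':A\to B'$ lie in $\mathcal H$, there exist a group $C$ and $g:B\to C$, $g':B'\to C$ in $\mathcal H$ with $g\circ f=g'\circ f'$. A subgroup function $\Gamma$ is $\mathcal H$-invariant if $f(\Gamma(A))\subset\Gamma(B)$ for every $f:A\to B$ in $\mathcal H$; a series $\{\Gamma^n\}$ is $\mathcal H=\{\mathcal H^n\}$-invariant if each $\Gamma^n$ is $\mathcal H^n$-invariant. The stabilization of $\Gamma$ with respect to $\mathcal H$ is $\Gamma_S(A)=\{a\in A\mid \exists f:A\to B,\ f\in\mathcal H,\ f(a)\in\Gamma(B)\}$; for a series, $\Gamma^n_S$ is the stabilization of $\Gamma^n$ with respect to $\mathcal H^n$. *)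

(* Defs.v *)
Set Implicit Arguments.

Record group := Group {
  gcar :> Type;
  gmul : gcar -> gcar -> gcar;
  ginv : gcar -> gcar;
  gone : gcar;
  gmulA : forall x y z, gmul x (gmul y z) = gmul (gmul x y) z;
  gmul1l : forall x, gmul gone x = x;
  gmul1r : forall x, gmul x gone = x;
  gmulVl : forall x, gmul (ginv x) x = gone;
  gmulVr : forall x, gmul x (ginv x) = gone
}.

Definition is_hom (A B : group) (f : A -> B) : Prop :=
  forall x y, f (gmul A x y) = gmul B (f x) (f y).

Definition maps := forall A B : group, (gcar A -> gcar B) -> Prop.

Record subcat := Subcat {
  ob : group -> Prop;
  hom : maps;
  hom_ob : forall A B f, hom A B f -> ob A /\ ob B;
  hom_is_hom : forall A B f, hom A B f -> is_hom A B f;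
  hom_id : forall A, ob A -> hom A A (fun x => x);
  hom_comp : forall A B D f g, hom A B f -> hom B D g ->
               hom A D (fun x => g (f x))
}.

Definition is_iso (C : subcat) (A B : group) (f : A -> B) : Prop :=
  hom C A B f /\ exists g : B -> A, hom C B A g /\
    (forall a, g (f a) = a) /\ (forall b, f (g b) = b).

Definition class_of_maps (C : subcat) (H : maps) : Prop :=
  (forall A B f, H A B f -> hom C A B f) /\
  (forall A B f, is_iso C A B f -> H A B f) /\
  (forall A B D f g, H A B f -> H B D g -> H A D (fun x => g (f x))) /\
  (forall A B B' f f', H A B f -> H A B' f' ->
     exists (D : group) (g : B -> D) (g' : B' -> D),
       H B D g /\ H B' D g' /\ forall a, g (f a) = g' (f' a)).

Definition is_normal_subgroup (A : group) (S : A -> Prop) : Prop :=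
  S (gone A) /\
  (forall x y, S x -> S y -> S (gmul A x y)) /\
  (forall x, S x -> S (ginv A x)) /\
  (forall x a, S a -> S (gmul A (gmul A (ginv A x) a) x)).

Definition subgroup_fun := forall A : group, gcar A -> Prop.

Definition is_subgroup_function (C : subcat) (G : subgroup_fun) : Prop :=
  forall A, ob C A -> is_normal_subgroup A (G A).

Definition invariant (H : maps) (G : subgroup_fun) : Prop :=
  forall A B f, H A B f -> forall a, G A a -> G B (f a).

Definition stab (H : maps) (G : subgroup_fun) : subgroup_fun :=
  fun A a => exists (B : group) (f : A -> B), H A B f /\ G B (f a).

Definition is_series (C : subcat) (G : nat -> subgroup_fun) : Prop :=
  (forall n, is_subgroup_function C (G n)) /\
  (forall A, ob C A -> forall a, G 0 A a) /\
  (forall n A, ob C A -> forall a, G (S n) A a -> G n A a).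

Definition series_invariant (H : nat -> maps) (G : nat -> subgroup_fun) : Prop :=
  forall n, invariant (H n) (G n).

(* Main.v *)
Require Import Defs.

Lemma hom_one (A B : group) (f : A -> B) : is_hom A B f -> f (gone A) = gone B.
Proof.
  intros Hf.
  assert (E : f (gone A) = gmul B (f (gone A)) (f (gone A))).
  { rewrite <- Hf, gmul1l; reflexivity. }
  transitivity (gmul B (gmul B (ginv B (f (gone A))) (f (gone A))) (f (gone A))).
  - rewrite gmulVl, gmul1l. reflexivity.
  - rewrite <- gmulA, <- E. apply gmulVl.
Qed.

Lemma hom_inv (A B : group) (f : A -> B) x : is_hom A B f -> f (ginv A x) = ginv B (f x).
Proof.
  intros Hf.
  assert (E : gmul B (f (ginv A x)) (f x) = gone B).
  { rewrite <- Hf, gmulVl. apply hom_one; auto. }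
  rewrite <- (gmul1r B (f (ginv A x))).
  rewrite <- (gmulVr B (f x)), gmulA, E, gmul1l. reflexivity.
Qed.

Lemma id_in (C : subcat) H A : class_of_maps C H -> ob C A -> H A A (fun x => x).
Proof.
  intros [_ [Hi _]] HA. apply Hi. split. apply hom_id; auto.
  exists (fun x => x). split; [apply hom_id; auto | split; reflexivity].
Qed.

Lemma part1 (C : subcat) (H : maps) (G : subgroup_fun) :
     class_of_maps C H -> is_subgroup_function C G -> invariant H G ->
     is_subgroup_function C (stab H G) /\ invariant H (stab H G).
Proof.
  intros HC HG Hinv.
  assert (Hcl := HC). destruct Hcl as [Hhom [Hiso [Hcomp Hnudge]]].
  assert (obB : forall A B f, H A B f -> ob C B).
  { intros A B f Hf. exact (proj2 (hom_ob C _ _ _ (Hhom _ _ _ Hf))). }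
  assert (ishom : forall A B f, H A B f -> is_hom A B f).
  { intros A B f Hf. apply (hom_is_hom C), Hhom; auto. }
  split.
  - intros A HA. split; [|split; [|split]].
    + exists A, (fun x => x). split. apply (id_in C H A HC HA).
      apply (HG A HA).
    + intros x y [B [f [Hf Hx]]] [B' [f' [Hf' Hy]]].
      destruct (Hnudge _ _ _ _ _ Hf Hf') as [D [g [g' [Hg [Hg' Heq]]]]].
      exists D, (fun a => g (f a)). split. apply Hcomp; auto.
      rewrite (ishom _ _ _ Hf), (ishom _ _ _ Hg).
      apply (HG D (obB _ _ _ Hg)).
      * apply (Hinv _ _ _ Hg); auto.
      * rewrite Heq. apply (Hinv _ _ _ Hg'); auto.
    + intros x [B [f [Hf Hx]]]. exists B, f. split; auto.
      rewrite (hom_inv _ _ _ _ (ishom _ _ _ Hf)). apply (HG B (obB _ _ _ Hf)); auto.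
    + intros x a [B [f [Hf Ha]]]. exists B, f. split; auto.
      rewrite !(ishom _ _ _ Hf), (hom_inv _ _ _ _ (ishom _ _ _ Hf)).
      apply (HG B (obB _ _ _ Hf)); auto.
  - intros A B f Hf a [B' [g [Hg Ha]]].
    destruct (Hnudge _ _ _ _ _ Hf Hg) as [D [h [h' [Hh [Hh' Heq]]]]].
    exists D, h. split; auto. rewrite Heq. apply (Hinv _ _ _ Hh'); auto.
Qed.

Theorem proposition2p9 (C : subcat) :
  (forall (H : maps) (G : subgroup_fun),
     class_of_maps C H -> is_subgroup_function C G -> invariant H G ->
     is_subgroup_function C (stab H G) /\ invariant H (stab H G)) /\
  (forall (H : nat -> maps) (G : nat -> subgroup_fun),
     (forall n, class_of_maps C (H n)) ->
     (forall n A B f, H (S n) A B f -> H n A B f) ->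
     is_series C G -> series_invariant H G ->
     is_series C (fun n => stab (H n) (G n)) /\
     series_invariant H (fun n => stab (H n) (G n))).
Proof.
  split. { apply part1. }
  intros H G HC Hmon [HG [HG0 HGS]] Hinv.
  assert (P := fun n => part1 C (H n) (G n) (HC n) (HG n) (Hinv n)).
  split; [split; [|split]|].
  - intros n. apply (P n).
  - intros A HA a. exists A, (fun x => x). split. apply (id_in C (H 0) A (HC 0) HA). apply HG0; auto.
  - intros n A HA a [B [f [Hf Ha]]]. exists B, f. split. apply Hmon; auto.
    apply HGS; auto.
    destruct (HC (S n)) as [Hh _].
    exact (proj2 (hom_ob C _ _ _ (Hh _ _ _ Hf))).
  - intros n. apply (P n).
Qed.
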